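(* Consider the family of single-server discrete-time queues described in the context, indexed by $\epsilon\in(0,\mu)$. Let $\bar q^{(\epsilon)}$ be a random variable distributed according to the stationary distribution of $\{q^{(\epsilon)}(t)\}_{t\ge0}$. Let $Z^{(\epsilon)}$ be an exponential random variable with rate $\frac{2}{(\sigma_a^{(\epsilon)})^2+\sigma_s^2}$, i.e. with mean $\frac{(\sigma_a^{(\epsilon)})^2+\sigma_s^2}{2}$. Then there exists a constant $K<\infty$, independent of $\epsilon$, such that for every $\epsilon\in(0,\mu)$, $$d_W\big(\epsilon\,\bar q^{(\epsilon)},\,Z^{(\epsilon)}\big)\le K\epsilon .$$
   Context: Wasserstein distance: for real-valued random variables $X,Y$, $d_W(X,Y)=\sup_{h\in \mathrm{Lip}(1)}|\mathbb E[h(X)]-\mathbb E[h(Y)]|$, where $\mathrm{Lip}(1)$ is the set of functions $h:\mathbb R\to\mathbb R$ with $|h(x)-h(y)|\le|x-y|$. Single-server queue: time is slotted. The queue length evolves as $q(t+1)=q(t)+a(t)-s(t)+u(t)$, where $u(t)=\max(s(t)-a(t)-q(t),0)$ is the unused service, and $q(0)$ is a nonnegative integer. The arrivals $\{a(t)\}_t$ are i.i.d. nonnegative integer-valued, the services $\{s(t)\}_t$ are i.i.d. nonnegative integer-valued, and the arrival and service sequences are independent of each other and of the past queue lengths. The service law is fixed with mean $\mu>0$ and variance $\sigma_s^2$. For each $\epsilon\in(0,\mu)$ the arrival law (denoted $a^{(\epsilon)}(t)$) has mean $\lambda^{(\epsilon)}=\mu-\epsilon$ and variance $(\sigma_a^{(\epsilon)})^2$.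 There are constants $A_{max},S_{max}<\infty$ independent of $\epsilon$ with $a^{(\epsilon)}(t)\le A_{max}$ and $s(t)\le S_{max}$ almost surely. There is a constant $c_0>0$ with $(\sigma_a^{(\epsilon)})^2+\sigma_s^2\ge c_0$ for all $\epsilon$. For each $\epsilon$ the Markov chain $\{q^{(\epsilon)}(t)\}$ is assumed to be positive recurrent with a stationary distribution. *)

(* Defs.v *)
From Stdlib Require Export Reals Lra.
Open Scope R_scope.

Definition bounded_pmf (p : nat -> R) (M : nat) : Prop :=
  (forall n, 0 <= p n) /\ (forall n, (M < n)%nat -> p n = 0) /\
  sum_f_R0 p M = 1.

Definition pmf_mean (p : nat -> R) (M : nat) : R :=
  sum_f_R0 (fun n => INR n * p n) M.
Definition pmf_var (p : nat -> R) (M : nat) : R :=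
  sum_f_R0 (fun n => (INR n - pmf_mean p M) ^ 2 * p n) M.

(* One-step transition probability of q(t+1) = max(q(t)+a(t)-s(t), 0)
   (nat truncated subtraction), arrivals ~ pa on {0..A}, services ~ ps
   on {0..S}, independent. *)
Definition trans (pa : nat -> R) (A : nat) (ps : nat -> R) (S : nat)
  (i j : nat) : R :=
  sum_f_R0 (fun a => sum_f_R0 (fun s =>
     pa a * ps s * (if Nat.eqb (i + a - s)%nat j then 1 else 0)) S) A.

Definition stationary (pa : nat -> R) (A : nat) (ps : nat -> R) (S : nat)
  (pi : nat -> R) : Prop :=
  (forall n, 0 <= pi n) /\ infinite_sum pi 1 /\
  forall j, infinite_sum (fun i => pi i * trans pa A ps S i j) (pi j).

Definition Lip1 (h : R -> R) : Prop :=
  forall x y, Rabs (h x - h y) <= Rabs (x - y).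

Definition improper_int0 (f : R -> R) (l : R) : Prop :=
  (forall b, 0 <= b -> inhabited (Riemann_integrable f 0 b)) /\
  forall eps, 0 < eps -> exists B, forall b (pr : Riemann_integrable f 0 b),
      B <= b -> Rabs (RiemannInt pr - l) < eps.

Definition exp_density (theta x : R) : R := theta * exp (- (theta * x)).

(* Main.v *)
Require Import Defs.
From Stdlib Require Import Reals Lra Lia Psatz ZArith.
From Coquelicot Require Import Coquelicot.
Open Scope R_scope.

Lemma lip_cont (h : R -> R) : Lip1 h -> forall x, continuous h x.
Proof.
  intros Hh x. apply filterlim_locally. intros eps.
  exists eps. intros y Hy. unfold ball in *; simpl in *. unfold AbsRing_ball, abs, minus, plus, opp in *; simpl in *.
  eapply Rle_lt_trans; [apply Hh | exact Hy].
Qed.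

Definition dens_f (h : R -> R) (th : R) (y : R) := h y * exp_density th y.

Lemma dens_cont h th : Lip1 h -> forall x, continuous (dens_f h th) x.
Proof.
  intros Hh x. unfold dens_f, exp_density.
  apply (continuous_mult h (fun y => th * exp (- (th * y)))).
  - apply lip_cont; auto.
  - apply (ex_derive_continuous (fun y => th * exp (- (th * y)))). auto_derive. auto.
Qed.

Definition Jf h th x := RInt (dens_f h th) 0 x.

Lemma J_derive h th : Lip1 h -> forall x, is_derive (Jf h th) x (dens_f h th x).
Proof.
  intros Hh x. unfold Jf. apply (is_derive_RInt (dens_f h th) _ 0).
  - apply filter_forall. intros b. apply (@RInt_correct R_CompleteNormedModule). apply (@ex_RInt_continuous R_CompleteNormedModule).
    intros; apply dens_cont; auto.
  - apply dens_cont; auto.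
Qed.

Lemma exp_sq y : 0 <= y -> y * y / 4 <= exp y.
Proof.
  intros Hy. replace y with (y/2 + y/2) at 3 by field. rewrite exp_plus.
  pose proof (exp_ineq1_le (y/2)). nra.
Qed.

Lemma exp_decay th a eps : 0 < th -> 0 <= a -> 0 < eps ->
  exists X, 0 <= X /\ forall x, X <= x -> exp (- (th * x)) * (a + x) < eps.
Proof.
  intros Hth Ha He.
  exists (Rmax 1 (Rmax a (16 / (th * th * eps)))). split.
  { apply Rle_trans with 1; [lra | apply Rmax_l]. }
  intros x Hx.
  assert (H1 : 1 <= x) by (eapply Rle_trans; [apply Rmax_l | exact Hx]).
  assert (H2 : a <= x) by (eapply Rle_trans; [eapply Rle_trans; [apply Rmax_l|apply Rmax_r] | exact Hx]).
  assert (H3 : 16 / (th * th * eps) <= x) by (eapply Rle_trans; [eapply Rle_trans; [apply Rmax_r|apply Rmax_r] | exact Hx]).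
  pose proof (exp_sq (th * x) ltac:(nra)) as Hex.
  rewrite exp_Ropp.
  assert (Hp : 0 < exp (th * x)) by apply exp_pos.
  apply (Rmult_lt_reg_r (exp (th * x))); auto.
  replace (/ exp (th * x) * (a + x) * exp (th * x)) with (a + x) by (field; lra).
  assert (Hthe : 0 < th * th * eps) by (apply Rmult_lt_0_compat; nra).
  assert (H4 : 16 <= x * (th * th * eps)).
  { unfold Rdiv in H3. apply (Rmult_le_compat_r (th*th*eps)) in H3; [|lra].
    rewrite Rmult_assoc, Rinv_l in H3; lra. }
  assert (H5: th * x * (th * x) / 4 * eps >= 4 * x) by nra.
  nra.
Qed.

Lemma lip_le h x y : Lip1 h -> h y - h x <= Rabs (y - x) /\ h x - h y <= Rabs (y - x).
Proof.
  intros Hh. pose proof (Hh y x) as H0. split.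
  - pose proof (Rle_abs (h y - h x)). lra.
  - pose proof (Rle_abs (-(h y - h x))) as H1. rewrite Rabs_Ropp in H1. lra.
Qed.

Definition Jlim h th c := forall eps, 0 < eps -> exists B, forall x, B <= x -> Rabs (Jf h th x - c) < eps.

Lemma phi_derive h th c x0 s : Lip1 h -> 0 < th -> forall x,
  is_derive (fun x => Jf h th x - c + exp (- (th * x)) * (h x0 + s * (x - x0) + s / th)) x
   (th * exp (- (th * x)) * (h x - h x0 - s * (x - x0))).
Proof.
  intros Hh Hth x.
  assert (HJ := J_derive h th Hh x).
  auto_derive.
  - exists (dens_f h th x); exact HJ.
  - replace (Derive (fun x => Jf h th x) x) with (dens_f h th x) by (symmetry; apply is_derive_unique; exact HJ). unfold dens_f, exp_density. field. lra.
Qed.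

Definition phif h th c x0 s x := Jf h th x - c + exp (- (th * x)) * (h x0 + s * (x - x0) + s / th).

Lemma phi_mvt h th c x0 s : Lip1 h -> 0 < th -> forall x, x0 <= x ->
  exists y, x0 <= y <= x /\ phif h th c x0 s x - phif h th c x0 s x0 =
     th * exp (- (th * y)) * (h y - h x0 - s * (y - x0)) * (x - x0).
Proof.
  intros Hh Hth x Hx.
  destruct (MVT_gen (phif h th c x0 s) x0 x (fun y => th * exp (- (th * y)) * (h y - h x0 - s * (y - x0)))) as [y [Hy Heq]].
  - intros y _. apply phi_derive; auto.
  - intros y _. apply continuity_pt_filterlim. apply (@ex_derive_continuous R_AbsRing R_NormedModule).
    eexists. apply phi_derive; auto.
  - exists y. rewrite Rmin_left in Hy by lra. rewrite Rmax_right in Hy by lra. split; auto.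
Qed.

Lemma phi_lim h th c x0 s : 0 < th -> Jlim h th c -> -1 <= s <= 1 ->
  forall eps, 0 < eps -> exists X, forall x, X <= x -> Rabs (phif h th c x0 s x) < eps.
Proof.
  intros Hth HJ Hs eps He.
  destruct (HJ (eps/2) ltac:(lra)) as [B HB].
  destruct (exp_decay th (Rabs (h x0) + Rabs x0 + 1/th) (eps/2) Hth) as [X [HX0 HX]].
  { pose proof (Rabs_pos (h x0)); pose proof (Rabs_pos x0).
    assert (0 < 1/th) by (apply Rdiv_lt_0_compat; lra). lra. }
  lra.
  exists (Rmax B X). intros x Hx.
  assert (HxB : B <= x) by (eapply Rle_trans; [apply Rmax_l|exact Hx]).
  assert (HxX : X <= x) by (eapply Rle_trans; [apply Rmax_r|exact Hx]).
  specialize (HB x HxB). specialize (HX x HxX).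
  unfold phif. eapply Rle_lt_trans. apply Rabs_triang.
  assert (Rabs (exp (- (th * x)) * (h x0 + s * (x - x0) + s / th)) <= exp (- (th * x)) * (Rabs (h x0) + Rabs x0 + 1 / th + x)).
  { rewrite Rabs_mult, (Rabs_right (exp _)) by (left; apply exp_pos).
    apply Rmult_le_compat_l; [left; apply exp_pos|].
    assert (HxX0 : 0 <= x) by lra.
    pose proof (Rle_abs (h x0)). pose proof (Rle_abs (-(h x0))). rewrite Rabs_Ropp in *.
    pose proof (Rle_abs x0). pose proof (Rle_abs (- x0)). rewrite Rabs_Ropp in *.
    assert (0 < /th) by (apply Rinv_0_lt_compat; lra).
    assert (s * / th <= /th) by nra. assert (- /th <= s * /th) by nra.
    assert (s * x <= x) by nra. assert (- x <= s * x) by nra.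
    assert (s * x0 <= Rabs x0) by nra. assert (- Rabs x0 <= s * x0) by nra.
    apply Rabs_le. unfold Rdiv. split; nra. }
  lra.
Qed.

Lemma g_bound h th c : Lip1 h -> 0 < th -> Jlim h th c -> forall x0,
  Rabs (exp (th * x0) * (Jf h th x0 - c) + h x0) <= 1 / th.
Proof.
  intros Hh Hth HJ x0.
  assert (Hex : 0 < exp (th * x0)) by apply exp_pos.
  assert (Hinv : exp (- (th * x0)) * exp (th * x0) = 1) by (rewrite <- exp_plus; replace (- (th*x0) + th*x0) with 0 by ring; apply exp_0).
  apply Rabs_le. split.
  - (* lower: s = 1, psi nonincreasing, psi(x0) >= 0 *)
    assert (H0 : 0 <= phif h th c x0 1 x0).
    { destruct (Rle_or_lt 0 (phif h th c x0 1 x0)) as [H|H]; auto.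
      destruct (phi_lim h th c x0 1 Hth HJ ltac:(lra) (- phif h th c x0 1 x0) ltac:(lra)) as [X HX].
      set (x := Rmax X x0). specialize (HX x (Rmax_l _ _)).
      destruct (phi_mvt h th c x0 1 Hh Hth x (Rmax_r _ _)) as [y [Hy Heq]].
      pose proof (lip_le h x0 y Hh) as [L1 L2]. rewrite Rabs_right in L1 by lra.
      assert (th * exp (- (th * y)) * (h y - h x0 - 1 * (y - x0)) * (x - x0) <= 0).
      { assert (0 <= th * exp (- (th * y))) by (pose proof (exp_pos (- (th*y))); nra).
        assert (0 <= x - x0) by lra. 
        apply Rmult_le_0_r; auto. apply Rmult_le_0_l; auto. lra. }
      pose proof (Rle_abs (- phif h th c x0 1 x)) as H2. rewrite Rabs_Ropp in H2. lra. }
    unfold phif in H0. replace (x0 - x0) with 0 in H0 by ring.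
    assert (0 <= exp (th * x0) * (Jf h th x0 - c + exp (- (th * x0)) * (h x0 + 1 * 0 + 1 / th))) by nra.
    replace (exp (th * x0) * (Jf h th x0 - c + exp (- (th * x0)) * (h x0 + 1 * 0 + 1 / th))) with
       (exp (th * x0) * (Jf h th x0 - c) + (exp (- (th * x0)) * exp (th * x0)) * (h x0 + 1 / th)) in H by ring.
    rewrite Hinv in H. lra.
  - assert (H0 : phif h th c x0 (-1) x0 <= 0).
    { destruct (Rle_or_lt (phif h th c x0 (-1) x0) 0) as [H|H]; auto.
      destruct (phi_lim h th c x0 (-1) Hth HJ ltac:(lra) (phif h th c x0 (-1) x0) ltac:(lra)) as [X HX].
      set (x := Rmax X x0). specialize (HX x (Rmax_l _ _)).
      destruct (phi_mvt h th c x0 (-1) Hh Hth x (Rmax_r _ _)) as [y [Hy Heq]].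
      pose proof (lip_le h x0 y Hh) as [L1 L2]. rewrite Rabs_right in L2 by lra.
      assert (0 <= th * exp (- (th * y)) * (h y - h x0 - -1 * (y - x0)) * (x - x0)).
      { assert (0 <= th * exp (- (th * y))) by (pose proof (exp_pos (- (th*y))); nra).
        assert (0 <= x - x0) by lra. 
        apply Rmult_le_pos; auto. apply Rmult_le_pos; auto. lra. }
      pose proof (Rle_abs (phif h th c x0 (-1) x)). lra. }
    unfold phif in H0. replace (x0 - x0) with 0 in H0 by ring.
    assert (exp (th * x0) * (Jf h th x0 - c + exp (- (th * x0)) * (h x0 + -1 * 0 + -1 / th)) <= 0) by nra.
    replace (exp (th * x0) * (Jf h th x0 - c + exp (- (th * x0)) * (h x0 + -1 * 0 + -1 / th))) with
       (exp (th * x0) * (Jf h th x0 - c) + (exp (- (th * x0)) * exp (th * x0)) * (h x0 - 1 / th)) in H by (unfold Rdiv; ring).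
    rewrite Hinv in H. lra.
Qed.

Definition gf h th c x := exp (th * x) * (Jf h th x - c) + c.
Definition gd h th c x := th * (exp (th * x) * (Jf h th x - c) + h x).

Lemma g_derive h th c : Lip1 h -> 0 < th -> forall x, is_derive (gf h th c) x (gd h th c x).
Proof.
  intros Hh Hth x. assert (HJ := J_derive h th Hh x). unfold gf, gd.
  auto_derive.
  - exists (dens_f h th x); exact HJ.
  - replace (Derive (fun x => Jf h th x) x) with (dens_f h th x) by (symmetry; apply is_derive_unique; exact HJ).
    unfold dens_f, exp_density.
    assert (exp (th * x) * exp (- (th * x)) = 1) by (rewrite <- exp_plus; replace (th*x + - (th*x)) with 0 by ring; apply exp_0).
    transitivity (th * exp (th * x) * (Jf h th x - c) + th * h x * (exp (th * x) * exp (- (th * x)))); [ring|].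
    rewrite H. ring.
Qed.

Lemma gd_bound h th c : Lip1 h -> 0 < th -> Jlim h th c -> forall x, Rabs (gd h th c x) <= 1.
Proof.
  intros Hh Hth HJ x. unfold gd. rewrite Rabs_mult, Rabs_right by lra.
  pose proof (g_bound h th c Hh Hth HJ x).
  apply (Rmult_le_compat_l th) in H; [|lra]. replace (th * (1/th)) with 1 in H by (field; lra). lra.
Qed.

Lemma g_mvt h th c : Lip1 h -> 0 < th -> forall x y, exists z, Rmin x y <= z <= Rmax x y /\
   gf h th c y - gf h th c x = gd h th c z * (y - x).
Proof.
  intros Hh Hth x y.
  destruct (MVT_gen (gf h th c) x y (gd h th c)) as [z [Hz Heq]].
  - intros z _. apply g_derive; auto.
  - intros z _. apply continuity_pt_filterlim. apply (@ex_derive_continuous R_AbsRing R_NormedModule).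
    eexists. apply g_derive; auto.
  - exists z; auto.
Qed.

Lemma g_lip h th c : Lip1 h -> 0 < th -> Jlim h th c -> forall x y,
  Rabs (gf h th c y - gf h th c x) <= Rabs (y - x).
Proof.
  intros Hh Hth HJ x y. destruct (g_mvt h th c Hh Hth x y) as [z [_ Hz]]. rewrite Hz.
  rewrite Rabs_mult. pose proof (gd_bound h th c Hh Hth HJ z). pose proof (Rabs_pos (y - x)). nra.
Qed.

Lemma gd_lip h th c : Lip1 h -> 0 < th -> Jlim h th c -> forall x y,
  Rabs (gd h th c y - gd h th c x) <= 2 * th * Rabs (y - x).
Proof.
  intros Hh Hth HJ x y.
  replace (gd h th c y - gd h th c x) with (th * ((gf h th c y - gf h th c x) + (h y - h x))) by (unfold gd, gf; ring).
  rewrite Rabs_mult, Rabs_right by lra.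
  pose proof (g_lip h th c Hh Hth HJ x y). pose proof (Hh y x).
  pose proof (Rabs_triang (gf h th c y - gf h th c x) (h y - h x)). nra.
Qed.

Lemma g_taylor h th c : Lip1 h -> 0 < th -> Jlim h th c -> forall x y,
  Rabs (gf h th c y - gf h th c x - gd h th c x * (y - x)) <= 2 * th * ((y - x) * (y - x)).
Proof.
  intros Hh Hth HJ x y. destruct (g_mvt h th c Hh Hth x y) as [z [Hz Heq]].
  rewrite Heq. replace (gd h th c z * (y - x) - gd h th c x * (y - x)) with ((gd h th c z - gd h th c x) * (y - x)) by ring.
  rewrite Rabs_mult. pose proof (gd_lip h th c Hh Hth HJ x z).
  assert (Rabs (z - x) <= Rabs (y - x)).
  { unfold Rmin, Rmax in Hz. destruct (Rle_dec x y); apply Rabs_le; [rewrite Rabs_right by lra | rewrite Rabs_left by lra]; split; lra. }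
  assert (Rabs (y - x) * Rabs (y - x) = (y - x) * (y - x)) by (rewrite <- Rabs_mult; apply Rabs_pos_eq; apply Rle_0_sqr).
  pose proof (Rabs_pos (y - x)). pose proof (Rabs_pos (z - x)).
  pose proof (Rabs_pos (gd h th c z - gd h th c x)).
  set (A := Rabs (gd h th c z - gd h th c x)) in *. set (B := Rabs (y - x)) in *. set (C := Rabs (z - x)) in *.
  rewrite <- H1. assert (A <= 2 * th * B) by (eapply Rle_trans; [exact H|]; apply Rmult_le_compat_l; lra).
  apply Rmult_le_compat_r with (r := B) in H5; auto. lra.
Qed.

Lemma g0 h th c : gf h th c 0 = 0.
Proof. unfold gf, Jf. rewrite RInt_point. rewrite Rmult_0_r, exp_0. unfold zero; simpl. ring. Qed.

Lemma g_ode h th c : 0 < th -> forall x, (1/th) * gd h th c x - gf h th c x = h x - c.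
Proof. intros Hth x. unfold gd, gf. field. lra. Qed.

Lemma ex_RInt_dens h th : Lip1 h -> forall a b, ex_RInt (dens_f h th) a b.
Proof. intros Hh a b. apply (@ex_RInt_continuous R_CompleteNormedModule). intros; apply dens_cont; auto. Qed.

Definition Ef a th x := - ((a + x + 1/th) * exp (- (th * x))).
Definition ef a th x := (a + x) * (th * exp (- (th * x))).

Lemma Ef_derive a th : 0 < th -> forall x, is_derive (Ef a th) x (ef a th x).
Proof. intros Hth x. unfold Ef, ef. auto_derive; auto. field. lra. Qed.

Lemma ef_cont a th x : continuous (ef a th) x.
Proof. apply (@ex_derive_continuous R_AbsRing R_NormedModule). unfold ef. auto_derive. auto. Qed.

Lemma RInt_ef a th : 0 < th -> forall b b', RInt (ef a th) b b' = Ef a th b' - Ef a th b.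
Proof.
  intros Hth b b'. apply is_RInt_unique. apply (is_RInt_derive (Ef a th) (ef a th)).
  - intros; apply Ef_derive; auto.
  - intros; apply ef_cont.
Qed.

Lemma J_tail h th : Lip1 h -> 0 < th -> forall b b', 0 <= b <= b' ->
  Rabs (Jf h th b' - Jf h th b) <= (Rabs (h 0) + b + 1/th) * exp (- (th * b)).
Proof.
  intros Hh Hth b b' Hb.
  assert (HC : Jf h th b' - Jf h th b = RInt (dens_f h th) b b').
  { unfold Jf. rewrite <- (RInt_Chasles (dens_f h th) 0 b b') by (apply ex_RInt_dens; auto).
    unfold plus; simpl. ring. }
  rewrite HC.
  eapply Rle_trans. apply abs_RInt_le. lra. apply ex_RInt_dens; auto.
  eapply Rle_trans. apply (RInt_le _ (ef (Rabs (h 0)) th)). lra.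
  apply (@ex_RInt_continuous R_CompleteNormedModule). intros. 
  apply (continuous_comp (dens_f h th) Rabs). apply dens_cont; auto. apply continuous_Rabs.
  apply (@ex_RInt_continuous R_CompleteNormedModule). intros; apply ef_cont.
  - intros x Hx. unfold dens_f, exp_density, ef. rewrite Rabs_mult.
    rewrite (Rabs_right (th * _)) by (pose proof (exp_pos (- (th*x))); nra).
    apply Rmult_le_compat_r. pose proof (exp_pos (- (th*x))); nra.
    pose proof (Hh x 0). replace (x - 0) with x in H by ring. rewrite (Rabs_right x) in H by lra.
    pose proof (Rabs_triang_inv (h x) (h 0)). lra.
  - rewrite RInt_ef by auto. unfold Ef.
    pose proof (exp_pos (- (th * b'))). assert (0 < 1/th) by (apply Rdiv_lt_0_compat; lra).
    pose proof (Rabs_pos (h 0)). nra.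
Qed.

Lemma nat_above b : exists n : nat, b <= INR n.
Proof.
  destruct (archimed b) as [H1 _].
  destruct (Z.lt_ge_cases 0 (up b)) as [Hz|Hz].
  - exists (Z.to_nat (up b)). rewrite INR_IZR_INZ, Z2Nat.id by lia. lra.
  - exists 0%nat. simpl. assert (up b <= 0)%Z as Hz2 by lia. apply IZR_le in Hz2. lra.
Qed.

Lemma J_lim_exists h th : Lip1 h -> 0 < th -> exists c, Jlim h th c.
Proof.
  intros Hh Hth.
  set (a := Rabs (h 0) + 1/th).
  assert (Ha : 0 <= a) by (unfold a; pose proof (Rabs_pos (h 0)); assert (0 < 1/th) by (apply Rdiv_lt_0_compat; lra); lra).
  assert (Ht : forall b b', 0 <= b <= b' -> Rabs (Jf h th b' - Jf h th b) <= exp (- (th * b)) * (a + b)).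
  { intros b b' Hb. eapply Rle_trans. apply J_tail; auto. unfold a. right. ring. }
  assert (HC : Cauchy_crit (fun n => Jf h th (INR n))).
  { intros eps He. destruct (exp_decay th a eps Hth Ha He) as [X [HX0 HX]].
    destruct (nat_above X) as [N HN]. exists N. intros n m Hn Hm. unfold Rdist.
    destruct (Nat.le_ge_cases n m) as [Hnm|Hnm].
    - rewrite Rabs_minus_sym. eapply Rle_lt_trans. apply Ht. split. apply pos_INR. apply le_INR; auto.
      apply HX. apply le_INR in Hn. lra.
    - eapply Rle_lt_trans. apply Ht. split. apply pos_INR. apply le_INR; auto.
      apply HX. apply le_INR in Hm. lra. }
  destruct (Rcomplete.R_complete _ HC) as [c Hc].
  exists c. intros eps He.
  destruct (exp_decay th a (eps/2) Hth Ha ltac:(lra)) as [X [HX0 HX]].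
  destruct (Hc (eps/2) ltac:(lra)) as [N HN].
  exists X. intros b Hb.
  destruct (nat_above b) as [n0 Hn0].
  set (n := (n0 + N)%nat).
  assert (b <= INR n) by (unfold n; rewrite plus_INR; pose proof (pos_INR N); lra).
  specialize (HN n ltac:(unfold n; lia)). unfold Rdist in HN.
  pose proof (Ht b (INR n) ltac:(lra)) as H1. specialize (HX b Hb).
  pose proof (Rabs_triang (Jf h th b - Jf h th (INR n)) (Jf h th (INR n) - c)) as H2.
  replace (Jf h th b - Jf h th (INR n) + (Jf h th (INR n) - c)) with (Jf h th b - c) in H2 by ring.
  rewrite Rabs_minus_sym in H1. lra.
Qed.

Lemma improper_ok h th c : Lip1 h -> Jlim h th c -> improper_int0 (fun x => h x * exp_density th x) c.
Proof.
  intros Hh HJ. split.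
  - intros b Hb. constructor. apply continuity_implies_RiemannInt; auto.
    intros x _. apply continuity_pt_filterlim. apply (dens_cont h th Hh).
  - intros eps He. destruct (HJ eps He) as [B HB]. exists B. intros b pr Hb.
    rewrite <- RInt_Reals. apply HB; auto.
Qed.

Lemma sf_ext f g n : (forall k, (k <= n)%nat -> f k = g k) -> sum_f_R0 f n = sum_f_R0 g n.
Proof. intros H. induction n; simpl. apply H; lia. rewrite IHn by (intros; apply H; lia). rewrite H by lia. auto. Qed.

Lemma sf_plus f g n : sum_f_R0 (fun k => f k + g k) n = sum_f_R0 f n + sum_f_R0 g n.
Proof. induction n; simpl; try rewrite IHn; ring. Qed.

Lemma sf_scal f c n : sum_f_R0 (fun k => c * f k) n = c * sum_f_R0 f n.
Proof. induction n; simpl; try rewrite IHn; ring. Qed.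

Lemma sf_opp f n : sum_f_R0 (fun k => - f k) n = - sum_f_R0 f n.
Proof. induction n; simpl; try rewrite IHn; ring. Qed.

Lemma sf_minus f g n : sum_f_R0 (fun k => f k - g k) n = sum_f_R0 f n - sum_f_R0 g n.
Proof. induction n; simpl; try rewrite IHn; ring. Qed.

Lemma sf_const c n : sum_f_R0 (fun _ => c) n = INR (S n) * c.
Proof. induction n. simpl. ring. rewrite tech5, IHn. rewrite (S_INR (S n)). ring. Qed.

Lemma sf_le f g n : (forall k, (k <= n)%nat -> f k <= g k) -> sum_f_R0 f n <= sum_f_R0 g n.
Proof. intros H. induction n; simpl. apply H; lia. apply Rplus_le_compat. apply IHn; intros; apply H; lia. apply H; lia. Qed.

Lemma sf_nonneg f n : (forall k, (k <= n)%nat -> 0 <= f k) -> 0 <= sum_f_R0 f n.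
Proof. intros H. induction n; simpl. apply H; lia. apply Rplus_le_le_0_compat. apply IHn; intros; apply H; lia. apply H; lia. Qed.

Lemma sf_abs f n : Rabs (sum_f_R0 f n) <= sum_f_R0 (fun k => Rabs (f k)) n.
Proof. induction n; simpl. lra. eapply Rle_trans. apply Rabs_triang. lra. Qed.

Lemma sf_swap (F : nat -> nat -> R) n m :
  sum_f_R0 (fun i => sum_f_R0 (fun j => F i j) m) n = sum_f_R0 (fun j => sum_f_R0 (fun i => F i j) n) m.
Proof.
  induction n; simpl. reflexivity. rewrite IHn. rewrite <- sf_plus. reflexivity.
Qed.

Lemma sf_tail_zero f n : (forall k, (n < k)%nat -> f k = 0) -> forall m, (n <= m)%nat -> sum_f_R0 f m = sum_f_R0 f n.
Proof.
  intros H m Hm. induction Hm. auto. simpl. rewrite IHHm, H by lia. ring.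
Qed.

Lemma sf_split f n k : sum_f_R0 f (n + S k) = sum_f_R0 f n + sum_f_R0 (fun i => f (S n + i)%nat) k.
Proof.
  induction k.
  - rewrite Nat.add_1_r. simpl. rewrite Nat.add_0_r. reflexivity.
  - replace (n + S (S k))%nat with (S (n + S k)) by lia. simpl sum_f_R0 at 1. rewrite IHk. simpl.
    replace (S (n + S k)) with (S (n + S k)) by lia. replace (n + S k)%nat with (S (n + k)) by lia.
    rewrite Rplus_assoc. reflexivity.
Qed.

Definition ind (k j : nat) : R := if Nat.eqb k j then 1 else 0.

Lemma sf_ind k psi J : sum_f_R0 (fun j => ind k j * psi j) J = if Nat.leb k J then psi k else 0.
Proof.
  induction J; simpl.
  - unfold ind. destruct k; simpl; ring.
  - rewrite IHJ. unfold ind. destruct (Nat.eqb_spec k (S J)); destruct (Nat.leb_spec k J);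
    destruct (Nat.leb_spec k (S J)); try lia; try subst; ring.
Qed.

Lemma sf_scal_r f c n : sum_f_R0 f n * c = sum_f_R0 (fun k => f k * c) n.
Proof. induction n; simpl; try rewrite <- IHn; ring. Qed.

Lemma sf_zero n : sum_f_R0 (fun _ => 0) n = 0.
Proof. induction n; simpl; try rewrite IHn; ring. Qed.

Definition Eop (pa : nat -> R) (A : nat) (ps : nat -> R) (S : nat) (psi : nat -> R) (i : nat) : R :=
  sum_f_R0 (fun a => sum_f_R0 (fun s => pa a * ps s * psi (i + a - s)%nat) S) A.

Lemma trans_psi_gen pa A ps S psi i J :
  sum_f_R0 (fun j => trans pa A ps S i j * psi j) J =
  sum_f_R0 (fun a => sum_f_R0 (fun s => pa a * ps s * (if Nat.leb (i + a - s) J then psi (i + a - s)%nat else 0)) S) A.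
Proof.
  unfold trans.
  transitivity (sum_f_R0 (fun j => sum_f_R0 (fun a => sum_f_R0 (fun s => pa a * ps s * (ind (i + a - s) j * psi j)) S) A) J).
  { apply sf_ext. intros j _. rewrite sf_scal_r. apply sf_ext. intros a _. rewrite sf_scal_r. apply sf_ext. intros s _.
    unfold ind. ring. }
  rewrite sf_swap. apply sf_ext. intros a _. rewrite sf_swap. apply sf_ext. intros s _.
  rewrite sf_scal. rewrite sf_ind. reflexivity.
Qed.

Lemma trans_psi pa A ps S psi i J : (i + A <= J)%nat ->
  sum_f_R0 (fun j => trans pa A ps S i j * psi j) J = Eop pa A ps S psi i.
Proof.
  intros HJ. rewrite trans_psi_gen. unfold Eop. apply sf_ext. intros a Ha. apply sf_ext. intros s Hs.
  replace (Nat.leb (i + a - s) J) with true. auto. symmetry. apply Nat.leb_le. lia.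
Qed.

Lemma sum_prod pa A ps S : bounded_pmf pa A -> bounded_pmf ps S ->
  sum_f_R0 (fun a => sum_f_R0 (fun s => pa a * ps s) S) A = 1.
Proof.
  intros [_ [_ Ha]] [_ [_ Hs]].
  transitivity (sum_f_R0 (fun a => pa a * 1) A).
  apply sf_ext. intros a _. rewrite sf_scal, Hs. auto.
  rewrite <- sf_scal_r. rewrite Ha. ring.
Qed.

Lemma trans_nonneg pa A ps S i j : bounded_pmf pa A -> bounded_pmf ps S -> 0 <= trans pa A ps S i j.
Proof.
  intros [Ha _] [Hs _]. unfold trans. apply sf_nonneg. intros a _. apply sf_nonneg. intros s _.
  apply Rmult_le_pos. apply Rmult_le_pos; auto. destruct (Nat.eqb _ _); lra.
Qed.

Lemma trans_sum_le1 pa A ps S i J : bounded_pmf pa A -> bounded_pmf ps S ->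
  sum_f_R0 (fun j => trans pa A ps S i j) J <= 1.
Proof.
  intros Hpa Hps. rewrite <- (sum_prod pa A ps S Hpa Hps).
  transitivity (sum_f_R0 (fun j => trans pa A ps S i j * 1) J).
  right. apply sf_ext; intros; ring.
  rewrite trans_psi_gen. destruct Hpa as [Ha _]; destruct Hps as [Hs _].
  apply sf_le. intros a _. apply sf_le. intros s _. destruct (Nat.leb _ _).
  right; ring. rewrite Rmult_0_r. apply Rmult_le_pos; auto.
Qed.

Lemma trans_zero_high pa A ps S i j : (i + A < j)%nat -> trans pa A ps S i j = 0.
Proof.
  intros H. unfold trans. transitivity (sum_f_R0 (fun _ => 0) A); [|apply sf_zero]. apply sf_ext. intros a Ha.
  transitivity (sum_f_R0 (fun _ => 0) S); [|apply sf_zero]. apply sf_ext. intros s Hs.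
  rewrite (proj2 (Nat.eqb_neq _ _)) by lia. ring.
Qed.

Lemma trans_zero_low pa A ps S i j : (j + S < i)%nat -> trans pa A ps S i j = 0.
Proof.
  intros H. unfold trans. transitivity (sum_f_R0 (fun _ => 0) A); [|apply sf_zero]. apply sf_ext. intros a Ha.
  transitivity (sum_f_R0 (fun _ => 0) S); [|apply sf_zero]. apply sf_ext. intros s Hs.
  rewrite (proj2 (Nat.eqb_neq _ _)) by lia. ring.
Qed.

Lemma cv_eventually_const u c n0 : (forall n, (n0 <= n)%nat -> u n = c) -> Un_cv u c.
Proof. intros H eps He. exists n0. intros n Hn. rewrite H by lia. unfold Rdist. rewrite Rminus_diag, Rabs_R0. auto. Qed.

Lemma stat_balance pa A ps S pi j K : stationary pa A ps S pi -> (j + S <= K)%nat ->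
  pi j = sum_f_R0 (fun i => pi i * trans pa A ps S i j) K.
Proof.
  intros [_ [_ Hb]] HK. specialize (Hb j). unfold infinite_sum in Hb.
  apply (UL_sequence _ _ _ Hb).
  apply cv_eventually_const with K. intros n Hn. apply sf_tail_zero with (n := K); auto.
  intros k Hk. rewrite trans_zero_low by lia. ring.
Qed.

Fixpoint sumk (f : nat -> R) (n k : nat) : R :=
  match k with O => 0 | S k' => sumk f n k' + f (S n + k')%nat end.

Lemma sf_split_k f n k : sum_f_R0 f (n + k) = sum_f_R0 f n + sumk f n k.
Proof.
  induction k; simpl. rewrite Nat.add_0_r. ring.
  replace (n + S k)%nat with (S (n + k)) by lia. simpl. rewrite IHk. ring.
Qed.

Lemma sumk_abs_le f g n k : (forall i, Rabs (f i) <= g i) -> Rabs (sumk f n k) <= sumk g n k.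
Proof.
  intros H. induction k; simpl. rewrite Rabs_R0; lra.
  eapply Rle_trans. apply Rabs_triang. specialize (H (S (n + k))). lra.
Qed.

Lemma sumk_cv0 e k : Un_cv e 0 -> Un_cv (fun n => sumk e n k) 0.
Proof.
  intros He. induction k; simpl.
  - apply cv_eventually_const with 0%nat. auto.
  - replace 0 with (0 + 0) by ring. apply CV_plus; auto.
    intros eps Heps. destruct (He eps Heps) as [N HN]. exists N. intros n Hn. apply HN. lia.
Qed.

Lemma cv_shift u l A : Un_cv u l -> Un_cv (fun n => u (n + A)%nat) l.
Proof. intros H eps He. destruct (H eps He) as [N HN]. exists N. intros n Hn. apply HN. lia. Qed.

Lemma stat_identity pa A ps S pi psi B L1 L2 :
  bounded_pmf pa A -> bounded_pmf ps S -> stationary pa A ps S pi ->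
  (forall j, Rabs (psi j) <= B j) -> (forall j k, (j <= k)%nat -> B j <= B k) ->
  Un_cv (fun i => pi i * B (i + A)%nat) 0 ->
  infinite_sum (fun j => pi j * psi j) L1 ->
  infinite_sum (fun i => pi i * Eop pa A ps S psi i) L2 -> L1 = L2.
Proof.
  intros Hpa Hps Hst HB Hmono He H1 H2.
  assert (Hpi : forall i, 0 <= pi i) by (destruct Hst; auto).
  set (G := fun N i => pi i * sum_f_R0 (fun j => trans pa A ps S i j * psi j) (N + A)).
  assert (Key : forall N, sum_f_R0 (fun j => pi j * psi j) (N + A) =
     sum_f_R0 (fun i => pi i * Eop pa A ps S psi i) N + sumk (G N) N (A + S)).
  { intros N.
    transitivity (sum_f_R0 (fun j => sum_f_R0 (fun i => pi i * trans pa A ps S i j * psi j) (N + A + S)) (N + A)).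
    { apply sf_ext. intros j Hj. rewrite (stat_balance pa A ps S pi j (N + A + S) Hst) by lia.
      rewrite sf_scal_r. reflexivity. }
    rewrite <- sf_swap.
    replace (N + A + S)%nat with (N + (A + S))%nat by lia. rewrite sf_split_k. f_equal.
    - apply sf_ext. intros i Hi. rewrite <- (trans_psi pa A ps S psi i (N + A)) by lia.
      rewrite <- sf_scal. apply sf_ext. intros; ring.
    - unfold G. induction (A + S)%nat; simpl; auto. rewrite IHn. f_equal. rewrite <- sf_scal. apply sf_ext. intros; ring. }
  assert (Hrem : Un_cv (fun N => sumk (G N) N (A + S)) 0).
  { assert (Hb : forall N, Rabs (sumk (G N) N (A + S)) <= sumk (fun i => pi i * B (i + A)%nat) N (A + S)).
    { intros N. apply sumk_abs_le. intros i. unfold G. rewrite Rabs_mult, (Rabs_right (pi i)) by (apply Rle_ge; auto).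
      apply Rmult_le_compat_l; auto.
      eapply Rle_trans. apply sf_abs.
      eapply Rle_trans with (sum_f_R0 (fun j => trans pa A ps S i j * B (i + A)%nat) (N + A)).
      { apply sf_le. intros j _. rewrite Rabs_mult, (Rabs_right (trans _ _ _ _ _ _)) by (apply Rle_ge; apply trans_nonneg; auto).
        destruct (Nat.le_gt_cases j (i + A)) as [Hj|Hj].
        - apply Rmult_le_compat_l. apply trans_nonneg; auto. eapply Rle_trans. apply HB. apply Hmono; auto.
        - rewrite trans_zero_high by lia. lra. }
      rewrite <- sf_scal_r. assert (0 <= B (i + A)%nat) by (eapply Rle_trans; [apply Rabs_pos|apply HB]).
      pose proof (trans_sum_le1 pa A ps S i (N + A) Hpa Hps). rewrite <- (Rmult_1_l (B (i + A)%nat)) at 2. apply Rmult_le_compat_r; auto. }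
    pose proof (sumk_cv0 _ (A + S) He) as Hc.
    intros eps Heps. destruct (Hc eps Heps) as [N0 HN0]. exists N0. intros n Hn.
    specialize (HN0 n Hn). specialize (Hb n). unfold Rdist in *. rewrite Rminus_0_r in *.
    eapply Rle_lt_trans. apply Hb. eapply Rle_lt_trans. apply Rle_abs. auto. }
  assert (HL : Un_cv (fun N => sum_f_R0 (fun i => pi i * Eop pa A ps S psi i) N + sumk (G N) N (A + S)) L1).
  { intros eps Heps. destruct (cv_shift _ _ A H1 eps Heps) as [N0 HN0]. exists N0. intros n Hn.
    rewrite <- Key. apply HN0; auto. }
  assert (HL2 : Un_cv (fun N => sum_f_R0 (fun i => pi i * Eop pa A ps S psi i) N + sumk (G N) N (A + S)) (L2 + 0)).
  { apply CV_plus; auto. }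
  rewrite Rplus_0_r in HL2. apply (UL_sequence _ _ _ HL HL2).
Qed.

Lemma isum_le f g l1 l2 : infinite_sum f l1 -> infinite_sum g l2 -> (forall n, f n <= g n) -> l1 <= l2.
Proof. intros H1 H2 H. eapply Rle_cv_lim; [|exact H1|exact H2]. intros n; apply sf_le; auto. Qed.

Lemma isum_plus f g l1 l2 : infinite_sum f l1 -> infinite_sum g l2 -> infinite_sum (fun n => f n + g n) (l1 + l2).
Proof. intros H1 H2. unfold infinite_sum. eapply Un_cv_ext. intros n; symmetry; apply sf_plus. apply CV_plus; auto. Qed.

Lemma isum_scal f c l : infinite_sum f l -> infinite_sum (fun n => c * f n) (c * l).
Proof. intros H. unfold infinite_sum. eapply Un_cv_ext. intros n; symmetry; apply sf_scal. apply CV_mult; auto. apply cv_eventually_const with 0%nat; auto. Qed.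

Lemma isum_minus f g l1 l2 : infinite_sum f l1 -> infinite_sum g l2 -> infinite_sum (fun n => f n - g n) (l1 - l2).
Proof. intros H1 H2. unfold infinite_sum. eapply Un_cv_ext. intros n; symmetry; apply sf_minus. apply CV_minus; auto. Qed.

Lemma isum_ext f g l : (forall n, f n = g n) -> infinite_sum f l -> infinite_sum g l.
Proof. intros H H1. unfold infinite_sum. eapply Un_cv_ext. intros n; apply sf_ext; intros; apply H. auto. Qed.

Lemma isum_unique f l1 l2 : infinite_sum f l1 -> infinite_sum f l2 -> l1 = l2.
Proof. intros; eapply UL_sequence; eauto. Qed.

Lemma isum_fin f N : (forall n, (N < n)%nat -> f n = 0) -> infinite_sum f (sum_f_R0 f N).
Proof. intros H. apply cv_eventually_const with N. intros n Hn. apply sf_tail_zero; auto. Qed.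

Lemma isum_terms_cv0 f l : infinite_sum f l -> Un_cv f 0.
Proof.
  intros H eps He. destruct (H (eps/2) ltac:(lra)) as [N HN]. exists (S N). intros n Hn.
  destruct n. lia. unfold Rdist. rewrite Rminus_0_r.
  replace (f (S n)) with (sum_f_R0 f (S n) - l - (sum_f_R0 f n - l)) by (simpl; ring).
  pose proof (HN (S n) ltac:(lia)). pose proof (HN n ltac:(lia)). unfold Rdist in *.
  eapply Rle_lt_trans. apply Rabs_triang. rewrite Rabs_Ropp. lra.
Qed.

Lemma isum_dom f g l : (forall n, Rabs (f n) <= g n) -> infinite_sum g l -> exists l', infinite_sum f l'.
Proof.
  intros H Hg. assert (ex_series f).
  { apply (ex_series_le f g). intros n. apply H. exists l. apply is_series_Reals. auto. }
  destruct H0 as [l' Hl']. exists l'. apply is_series_Reals. auto.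
Qed.

Lemma isum_abs_le f g l m : infinite_sum f l -> infinite_sum g m -> (forall n, Rabs (f n) <= g n) -> Rabs l <= m.
Proof.
  intros H1 H2 H. apply Rabs_le. split.
  - assert (infinite_sum (fun n => - g n) (- m)).
    { replace (- m) with (-1 * m) by ring. eapply isum_ext; [|apply (isum_scal _ (-1) _ H2)]. intros; cbv beta; ring. }
    replace (-m) with (- m) by ring. apply (isum_le _ _ _ _ H0 H1). intros n. specialize (H n). apply Rabs_le_between in H. lra.
  - apply (isum_le _ _ _ _ H1 H2). intros n. specialize (H n). pose proof (Rle_abs (f n)). lra.
Qed.

Lemma growing_bounded_cv u C : (forall n, u n <= u (S n)) -> (forall n, u n <= C) -> exists l, Un_cv u l.
Proof.
  intros Hg Hb. destruct (growing_cv u Hg) as [l Hl]. exists C. intros x [n Hn]. subst. auto. exists l; auto.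
Qed.

Definition PE (pa : nat -> R) (A : nat) (ps : nat -> R) (S : nat) (F : nat -> nat -> R) : R :=
  sum_f_R0 (fun a => sum_f_R0 (fun s => pa a * ps s * F a s) S) A.

Lemma PE_le pa A ps S F G : bounded_pmf pa A -> bounded_pmf ps S ->
  (forall a s, (a <= A)%nat -> (s <= S)%nat -> F a s <= G a s) -> PE pa A ps S F <= PE pa A ps S G.
Proof.
  intros [Ha _] [Hs _] H. unfold PE. apply sf_le. intros a Hla. apply sf_le. intros s Hls.
  apply Rmult_le_compat_l. apply Rmult_le_pos; auto. apply H; auto.
Qed.

Lemma PE_plus pa A ps S F G : PE pa A ps S (fun a s => F a s + G a s) = PE pa A ps S F + PE pa A ps S G.
Proof. unfold PE. rewrite <- sf_plus. apply sf_ext. intros. rewrite <- sf_plus. apply sf_ext. intros. ring. Qed.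

Lemma PE_scal pa A ps S F c : PE pa A ps S (fun a s => c * F a s) = c * PE pa A ps S F.
Proof. unfold PE. rewrite <- sf_scal. apply sf_ext. intros. rewrite <- sf_scal. apply sf_ext. intros. ring. Qed.

Lemma PE_ext pa A ps S F G : (forall a s, (a <= A)%nat -> (s <= S)%nat -> F a s = G a s) -> PE pa A ps S F = PE pa A ps S G.
Proof. intros H. unfold PE. apply sf_ext. intros. apply sf_ext. intros. rewrite H; auto. Qed.

Lemma PE_a pa A ps S f : bounded_pmf ps S -> PE pa A ps S (fun a s => f a) = sum_f_R0 (fun a => pa a * f a) A.
Proof.
  intros [_ [_ Hs]]. unfold PE. apply sf_ext. intros a _.
  transitivity (pa a * f a * sum_f_R0 ps S). rewrite <- sf_scal. apply sf_ext; intros; ring. rewrite Hs; ring.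
Qed.

Lemma PE_s pa A ps S f : bounded_pmf pa A -> PE pa A ps S (fun a s => f s) = sum_f_R0 (fun s => ps s * f s) S.
Proof.
  intros [_ [_ Ha]]. unfold PE. rewrite sf_swap.
  apply sf_ext. intros s _.
  transitivity (ps s * f s * sum_f_R0 pa A). rewrite <- sf_scal. apply sf_ext; intros; ring. rewrite Ha; ring.
Qed.

Lemma PE_const pa A ps S c : bounded_pmf pa A -> bounded_pmf ps S -> PE pa A ps S (fun _ _ => c) = c.
Proof. intros Ha Hs. rewrite (PE_a _ _ _ _ (fun _ => c) Hs). destruct Ha as [_ [_ Ha]].
  transitivity (sum_f_R0 pa A * c). rewrite sf_scal_r. apply sf_ext; intros; ring. rewrite Ha; ring. Qed.

Lemma PE_prod pa A ps S f g : PE pa A ps S (fun a s => f a * g s) = sum_f_R0 (fun a => pa a * f a) A * sum_f_R0 (fun s => ps s * g s) S.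
Proof.
  unfold PE. rewrite sf_scal_r. apply sf_ext. intros a _. rewrite (Rmult_comm _ (sum_f_R0 _ _)).
  rewrite sf_scal_r. apply sf_ext. intros; ring.
Qed.

Lemma second_moment p M : bounded_pmf p M ->
  sum_f_R0 (fun n => p n * (INR n * INR n)) M = pmf_var p M + pmf_mean p M * pmf_mean p M.
Proof.
  intros [_ [_ H1]]. unfold pmf_var. set (m := pmf_mean p M).
  transitivity (sum_f_R0 (fun n => (INR n - m) ^ 2 * p n) M + 2 * m * sum_f_R0 (fun n => INR n * p n) M - m * m * sum_f_R0 p M).
  - rewrite <- !sf_scal. rewrite <- sf_plus. rewrite <- sf_minus. apply sf_ext. intros; ring.
  - fold (pmf_mean p M). fold m. rewrite H1. ring.
Qed.

Lemma mean_alt p M : sum_f_R0 (fun n => p n * INR n) M = pmf_mean p M.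
Proof. unfold pmf_mean. apply sf_ext. intros; ring. Qed.

Lemma PE_X pa A ps S : bounded_pmf pa A -> bounded_pmf ps S ->
  PE pa A ps S (fun a s => INR a - INR s) = pmf_mean pa A - pmf_mean ps S.
Proof.
  intros Ha Hs. rewrite (PE_ext _ _ _ _ _ (fun a s => (fun a => INR a) a + (-1) * (fun s => INR s) s))
    by (intros; cbv beta; ring).
  rewrite PE_plus, PE_scal, PE_a, PE_s by auto. rewrite !mean_alt. ring.
Qed.

Lemma PE_X2 pa A ps S : bounded_pmf pa A -> bounded_pmf ps S ->
  PE pa A ps S (fun a s => (INR a - INR s) * (INR a - INR s)) =
   pmf_var pa A + pmf_var ps S + (pmf_mean pa A - pmf_mean ps S) * (pmf_mean pa A - pmf_mean ps S).
Proof.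
  intros Ha Hs.
  rewrite (PE_ext _ _ _ _ _
    (fun a s => (fun a => INR a * INR a) a + ((-2) * (INR a * INR s) + (fun s => INR s * INR s) s)))
    by (intros; cbv beta; ring).
  rewrite PE_plus, PE_plus, PE_scal, PE_a, PE_s, PE_prod by auto.
  rewrite !mean_alt. rewrite !second_moment by auto. ring.
Qed.

Lemma partial_le f l n : (forall k, 0 <= f k) -> infinite_sum f l -> sum_f_R0 f n <= l.
Proof.
  intros Hf H. set (g := fun k => if Nat.leb k n then f k else 0).
  assert (Hg : infinite_sum g (sum_f_R0 g n)).
  { apply isum_fin. intros k Hk. unfold g. destruct (Nat.leb_spec k n); auto; lia. }
  replace (sum_f_R0 f n) with (sum_f_R0 g n).
  apply (isum_le _ _ _ _ Hg H). intros k. unfold g. destruct (Nat.leb k n); auto; lra.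
  apply sf_ext. intros k Hk. unfold g. destruct (Nat.leb_spec k n); auto; lia.
Qed.

Lemma Eop_PE pa A ps S psi i : Eop pa A ps S psi i = PE pa A ps S (fun a s => psi (i + a - s)%nat).
Proof. reflexivity. Qed.

Lemma INR_sub_cases i a s : (s <= i + a)%nat /\ INR (i + a - s) = INR i + INR a - INR s \/
                            (i + a < s)%nat /\ INR (i + a - s) = 0.
Proof.
  destruct (Nat.le_gt_cases s (i + a)).
  - left. split; auto. rewrite minus_INR, plus_INR; auto.
  - right. split; auto. replace (i + a - s)%nat with 0%nat by lia. auto.
Qed.

Lemma cube_bound (i a s N A S : nat) : (a <= A)%nat -> (s <= S)%nat ->
  INR (Nat.min (i + a - s) N) ^ 3 <=
  INR i ^ 3 + 3 * (INR i * INR i) * (INR a - INR s) + 3 * INR i * ((INR A + INR S) * (INR A + INR S))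
  + (INR A + INR S) ^ 3 + INR S ^ 3.
Proof.
  intros Ha Hs.
  assert (HaR := le_INR _ _ Ha). assert (HsR := le_INR _ _ Hs).
  pose proof (pos_INR a) as P1. pose proof (pos_INR s) as P2. pose proof (pos_INR i) as P3.
  assert (H1 : INR (Nat.min (i + a - s) N) ^ 3 <= INR (i + a - s) ^ 3).
  { assert (0 <= INR (Nat.min (i + a - s) N) <= INR (i + a - s)) by (split; [apply pos_INR| apply le_INR; lia]).
    apply pow_incr; lra. }
  assert (H2 : INR (i + a - s) ^ 3 <= (INR i + (INR a - INR s)) ^ 3 + INR S ^ 3).
  { destruct (INR_sub_cases i a s) as [[_ E]|[Hlt E]]; rewrite E.
    - pose proof (pow_le (INR S) 3 (pos_INR S)). replace (INR i + INR a - INR s) with (INR i + (INR a - INR s)) by ring. lra.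
    - apply lt_INR in Hlt. rewrite plus_INR in Hlt.
      assert (Hy : 0 <= - (INR i + (INR a - INR s)) <= INR S) by lra.
      pose proof (pow_incr _ _ 3 Hy) as Hp.
      replace ((- (INR i + (INR a - INR s))) ^ 3) with (- ((INR i + (INR a - INR s)) ^ 3)) in Hp by ring.
      replace (0 ^ 3) with 0 by ring. lra. }
  assert (Hx1 : - INR S <= INR a - INR s <= INR A) by lra.
  revert H2 Hx1. generalize (INR a - INR s). intros x H2 Hx1.
  assert (H3 : (INR i + x) ^ 3 <= INR i ^ 3 + 3 * (INR i * INR i) * x + 3 * INR i * ((INR A + INR S) * (INR A + INR S)) + (INR A + INR S) ^ 3).
  { pose proof (pos_INR A). pose proof (pos_INR S).
    assert (x * x <= (INR A + INR S) * (INR A + INR S)) by nra.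
    assert (x * x * x <= (INR A + INR S) * (INR A + INR S) * (INR A + INR S)) by nra.
    simpl. nra. }
  lra.
Qed.

Lemma stat_sum1 pa A ps S pi : stationary pa A ps S pi -> infinite_sum pi 1.
Proof. intros [_ [H _]]; auto. Qed.

Lemma psiN_E_le pa A ps S N i : bounded_pmf pa A -> bounded_pmf ps S ->
  Eop pa A ps S (fun j => INR (Nat.min j N) ^ 3) i <= INR N ^ 3.
Proof.
  intros Ha Hs. rewrite Eop_PE. rewrite <- (PE_const pa A ps S (INR N ^ 3)) by auto.
  apply PE_le; auto. intros. apply pow_incr. split. apply pos_INR. apply le_INR. lia.
Qed.

Lemma psiN_E_ge pa A ps S N i : bounded_pmf pa A -> bounded_pmf ps S ->
  0 <= Eop pa A ps S (fun j => INR (Nat.min j N) ^ 3) i.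
Proof.
  intros Ha Hs. rewrite Eop_PE. rewrite <- (PE_const pa A ps S 0) by auto.
  apply PE_le; auto. intros. apply pow_le. apply pos_INR.
Qed.

Lemma moment2 pa A ps Sb pi eps : bounded_pmf pa A -> bounded_pmf ps Sb -> stationary pa A ps Sb pi ->
  pmf_mean pa A - pmf_mean ps Sb = - eps -> 0 < eps ->
  exists m2, infinite_sum (fun i => pi i * ((INR i + 1) * (INR i + 1))) m2.
Proof.
  intros Ha Hs Hst Hm He.
  assert (Hpi : forall i, 0 <= pi i) by (destruct Hst; auto).
  assert (H1 := stat_sum1 _ _ _ _ _ Hst).
  assert (Hpi0 := isum_terms_cv0 _ _ H1).
  pose (M := INR A + INR Sb).
  pose (K3 := M ^ 3 + INR Sb ^ 3).
  pose (C1 := 9 * (M * M) * (M * M) / (4 * eps) + K3).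
  assert (HM : 0 <= M) by (unfold M; pose proof (pos_INR A); pose proof (pos_INR Sb); lra).
  assert (HK3 : 0 <= K3) by (unfold K3; pose proof (pow_le M 3 HM); pose proof (pow_le (INR Sb) 3 (pos_INR Sb)); lra).
  assert (HC1 : 0 <= C1).
  { unfold C1. assert (0 <= 9 * (M * M) * (M * M) / (4 * eps)).
    apply Rdiv_le_0_compat; [|lra]. pose proof (Rle_0_sqr M). unfold Rsqr in *. nra. lra. }
  assert (Hpart : forall n, sum_f_R0 (fun i => pi i * (INR i * INR i)) n <= C1 / (2 * eps)).
  { intros n. set (N := S n). clearbody N.
    pose (psi := fun j => INR (Nat.min j (S n)) ^ 3).
    assert (Hpsib : forall j, Rabs (psi j) <= INR (S n) ^ 3).
    { intros j. unfold psi. rewrite Rabs_right by (apply Rle_ge; apply pow_le; apply pos_INR).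
      apply pow_incr. split. apply pos_INR. apply le_INR. lia. }
    destruct (isum_dom (fun j => pi j * psi j) (fun j => pi j * INR (S n) ^ 3) (INR (S n) ^ 3)) as [L1 HL1].
    { intros j. rewrite Rabs_mult, Rabs_right by (apply Rle_ge; auto). apply Rmult_le_compat_l; auto. }
    { assert (H' := isum_scal _ (INR (S n) ^ 3) _ H1). rewrite Rmult_1_r in H'. eapply isum_ext; [|exact H'].
      intros; cbv beta; ring. }
    destruct (isum_dom (fun j => pi j * Eop pa A ps Sb psi j) (fun j => pi j * INR (S n) ^ 3) (INR (S n) ^ 3)) as [L2 HL2].
    { intros j. rewrite Rabs_mult, (Rabs_right (pi j)) by (apply Rle_ge; auto). apply Rmult_le_compat_l; auto.
      rewrite Rabs_right. apply psiN_E_le; auto. apply Rle_ge. apply psiN_E_ge; auto. }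
    { assert (H' := isum_scal _ (INR (S n) ^ 3) _ H1). rewrite Rmult_1_r in H'. eapply isum_ext; [|exact H'].
      intros; cbv beta; ring. }
    assert (Heq : L1 = L2).
    { apply (stat_identity pa A ps Sb pi psi (fun _ => INR (S n) ^ 3)); auto.
      intros; lra.
      replace 0 with (0 * INR (S n) ^ 3) by ring. apply CV_mult; auto. apply cv_eventually_const with 0%nat; auto. }
    assert (HD := isum_minus _ _ _ _ HL1 HL2). rewrite Heq, Rminus_diag in HD.
    pose (LB := fun i => if Nat.leb i n then pi i * (2 * eps * (INR i * INR i) - C1) else 0).
    assert (HLB : infinite_sum LB (sum_f_R0 LB n)).
    { apply isum_fin. intros k Hk. unfold LB. destruct (Nat.leb_spec k n); auto; lia. }
    assert (Hle : sum_f_R0 LB n <= 0).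
    { apply (isum_le _ _ _ _ HLB HD). intros i. unfold LB. destruct (Nat.leb_spec i n) as [Hi|Hi].
      - rewrite <- Rmult_minus_distr_l. apply Rmult_le_compat_l; auto.
        assert (Hpi_ : psi i = INR i ^ 3) by (unfold psi; f_equal; f_equal; lia).
        rewrite Hpi_.
        assert (HE : Eop pa A ps Sb psi i <= INR i ^ 3 + 3 * (INR i * INR i) * (- eps) + 3 * INR i * (M * M) + K3).
        { rewrite Eop_PE. eapply Rle_trans. apply (PE_le pa A ps Sb _
            (fun a s => (INR i ^ 3 + 3 * INR i * (M * M) + K3) + (3 * (INR i * INR i)) * (INR a - INR s))); auto.
          intros a s Ha' Hs'. unfold psi. pose proof (cube_bound i a s (S n) A Sb Ha' Hs'). unfold K3, M. lra.
          rewrite PE_plus, PE_const, PE_scal, PE_X by auto. rewrite Hm. lra. }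
        pose proof (pos_INR i).
        assert (0 <= eps * (INR i - 3 * (M * M) / (2 * eps)) * (INR i - 3 * (M * M) / (2 * eps))).
        { rewrite Rmult_assoc. apply Rmult_le_pos. lra. apply Rle_0_sqr. }
        assert (Hid : eps * (INR i - 3 * (M * M) / (2 * eps)) * (INR i - 3 * (M * M) / (2 * eps)) =
            eps * (INR i * INR i) - 3 * (M * M) * INR i + 9 * (M * M) * (M * M) / (4 * eps)) by (field; lra).
        unfold C1. lra.
      - rewrite <- Rmult_minus_distr_l. apply Rmult_le_pos; auto. unfold psi. replace (Nat.min i (S n)) with (S n) by lia.
        pose proof (psiN_E_le pa A ps Sb (S n) i Ha Hs) as HH. lra. }
    assert (Hsplit : sum_f_R0 LB n = 2 * eps * sum_f_R0 (fun i => pi i * (INR i * INR i)) n - C1 * sum_f_R0 pi n).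
    { rewrite <- !sf_scal, <- sf_minus. apply sf_ext. intros k Hk. unfold LB.
      destruct (Nat.leb_spec k n); [ring|lia]. }
    pose proof (partial_le pi 1 n Hpi H1).
    assert (0 <= sum_f_R0 pi n) by (apply sf_nonneg; auto).
    assert (2 * eps * sum_f_R0 (fun i => pi i * (INR i * INR i)) n <= C1) by nra.
    apply (Rmult_le_reg_l (2 * eps)). lra. replace (2 * eps * (C1 / (2 * eps))) with C1 by (field; lra). lra. }
  destruct (growing_bounded_cv (fun n => sum_f_R0 (fun i => pi i * ((INR i + 1) * (INR i + 1))) n) (2 * (C1 / (2 * eps)) + 2)) as [m2 Hm2].
  - intros n. rewrite tech5. assert (0 <= pi (S n) * ((INR (S n) + 1) * (INR (S n) + 1))) by (apply Rmult_le_pos; [auto| apply Rle_0_sqr]). lra.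
  - intros n. assert (sum_f_R0 (fun i => pi i * ((INR i + 1) * (INR i + 1))) n <=
        sum_f_R0 (fun i => 2 * (pi i * (INR i * INR i)) + 2 * pi i) n).
    { apply sf_le. intros k _. assert (Hq : (INR k + 1) * (INR k + 1) <= 2 * (INR k * INR k) + 2) by (pose proof (Rle_0_sqr (INR k - 1)) as Hs2; unfold Rsqr in Hs2; lra). apply (Rmult_le_compat_l (pi k)) in Hq; auto. lra. }
    rewrite sf_plus, !sf_scal in H. pose proof (Hpart n). pose proof (partial_le pi 1 n Hpi H1). lra.
  - exists m2. exact Hm2.
Qed.

Fixpoint Phi (G : R -> R) (e : R) (n : nat) : R :=
  match n with O => 0 | S n' => Phi G e n' + G (e * INR n') end.

Lemma Phi_up G Gd L e (HL : 0 <= L)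
  (Ht : forall x y, Rabs (G y - G x - Gd x * (y - x)) <= L * ((y - x) * (y - x))) :
  forall i n, Rabs (Phi G e (i + n) - Phi G e i - INR n * G (e * INR i) - e * Gd (e * INR i) * (INR n * (INR n - 1) / 2))
     <= L * (e * e) * (INR n * INR n * INR n).
Proof.
  intros i n. induction n.
  - rewrite Nat.add_0_r. simpl INR. match goal with |- Rabs ?X <= _ => replace X with 0 by field end.
    rewrite Rabs_R0. lra.
  - replace (i + S n)%nat with (S (i + n)) by lia. simpl Phi.
    pose proof (Ht (e * INR i) (e * INR (i + n))) as Hn. rewrite plus_INR in Hn.
    replace (e * (INR i + INR n) - e * INR i) with (e * INR n) in Hn by ring.
    rewrite plus_INR. rewrite S_INR.
    set (E1 := Phi G e (i + n) - Phi G e i - INR n * G (e * INR i) - e * Gd (e * INR i) * (INR n * (INR n - 1) / 2)) in *.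
    set (E2 := G (e * (INR i + INR n)) - G (e * INR i) - Gd (e * INR i) * (e * INR n)) in *.
    replace (Phi G e (i + n) + G (e * (INR i + INR n)) - Phi G e i - (INR n + 1) * G (e * INR i) -
      e * Gd (e * INR i) * ((INR n + 1) * (INR n + 1 - 1) / 2)) with (E1 + E2) by (unfold E1, E2; field).
    eapply Rle_trans. apply Rabs_triang.
    pose proof (pos_INR n). clearbody E1 E2.
    assert (L * (e * e) * (INR n * INR n * INR n) + L * (e * INR n * (e * INR n)) <= L * (e * e) * ((INR n + 1) * (INR n + 1) * (INR n + 1))).
    { replace (L * (e * INR n * (e * INR n))) with (L * (e * e) * (INR n * INR n)) by ring.
      rewrite <- Rmult_plus_distr_l. apply Rmult_le_compat_l. apply Rmult_le_pos; [lra|apply Rle_0_sqr]. nra. }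
    lra.
Qed.

Lemma Phi_down G Gd L e (HL : 0 <= L)
  (Ht : forall x y, Rabs (G y - G x - Gd x * (y - x)) <= L * ((y - x) * (y - x))) :
  forall i n, (n <= i)%nat ->
   Rabs (Phi G e (i - n) - Phi G e i + INR n * G (e * INR i) - e * Gd (e * INR i) * (INR n * (INR n + 1) / 2))
     <= L * (e * e) * (INR n * INR n * INR n).
Proof.
  intros i n. induction n; intros Hn.
  - rewrite Nat.sub_0_r. simpl INR. match goal with |- Rabs ?X <= _ => replace X with 0 by field end.
    rewrite Rabs_R0. lra.
  - specialize (IHn ltac:(lia)).
    assert (Hp : Phi G e (i - n) = Phi G e (i - S n) + G (e * INR (i - S n))).
    { replace (i - n)%nat with (S (i - S n)) by lia. reflexivity. }
    pose proof (Ht (e * INR i) (e * INR (i - S n))) as Hk. rewrite minus_INR in Hk by lia. rewrite S_INR in Hk.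
    replace (e * (INR i - (INR n + 1)) - e * INR i) with (- (e * (INR n + 1))) in Hk by ring.
    rewrite minus_INR, S_INR in Hp by lia. rewrite S_INR.
    set (E1 := Phi G e (i - n) - Phi G e i + INR n * G (e * INR i) - e * Gd (e * INR i) * (INR n * (INR n + 1) / 2)) in *.
    set (E2 := G (e * (INR i - (INR n + 1))) - G (e * INR i) - Gd (e * INR i) * - (e * (INR n + 1))) in *.
    replace (Phi G e (i - S n) - Phi G e i + (INR n + 1) * G (e * INR i) - e * Gd (e * INR i) * ((INR n + 1) * (INR n + 1 + 1) / 2))
      with (E1 - E2) by (unfold E1, E2; rewrite Hp; field).
    eapply Rle_trans. apply Rabs_triang. rewrite Rabs_Ropp.
    pose proof (pos_INR n). clearbody E1 E2.
    assert (L * (e * e) * (INR n * INR n * INR n) + L * (- (e * (INR n + 1)) * - (e * (INR n + 1))) <= L * (e * e) * ((INR n + 1) * (INR n + 1) * (INR n + 1))).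
    { replace (L * (- (e * (INR n + 1)) * - (e * (INR n + 1)))) with (L * (e * e) * ((INR n + 1) * (INR n + 1))) by ring.
      rewrite <- Rmult_plus_distr_l. apply Rmult_le_compat_l. apply Rmult_le_pos; [lra|apply Rle_0_sqr]. nra. }
    lra.
Qed.

Lemma Phi_taylor G Gd L e (HL : 0 <= L)
  (Ht : forall x y, Rabs (G y - G x - Gd x * (y - x)) <= L * ((y - x) * (y - x))) :
  forall i j, Rabs (Phi G e j - Phi G e i - (INR j - INR i) * G (e * INR i)
       - e * Gd (e * INR i) * ((INR j - INR i) * ((INR j - INR i) - 1) / 2))
     <= L * (e * e) * (Rabs (INR j - INR i) * Rabs (INR j - INR i) * Rabs (INR j - INR i)).
Proof.
  intros i j. destruct (Nat.le_gt_cases i j) as [Hij|Hij].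
  - replace j with (i + (j - i))%nat by lia. rewrite plus_INR.
    replace (INR i + INR (j - i) - INR i) with (INR (j - i)) by ring.
    rewrite (Rabs_right (INR (j - i))) by (apply Rle_ge; apply pos_INR). apply Phi_up; auto.
  - replace j with (i - (i - j))%nat by lia. rewrite (minus_INR i (i - j)) by lia.
    replace (INR i - INR (i - j) - INR i) with (- INR (i - j)) by ring.
    rewrite Rabs_Ropp, (Rabs_right (INR (i - j))) by (apply Rle_ge; apply pos_INR).
    pose proof (Phi_down G Gd L e HL Ht i (i - j) ltac:(lia)).
    match goal with |- Rabs ?X <= _ => replace X with
      (Phi G e (i - (i - j)) - Phi G e i + INR (i - j) * G (e * INR i) - e * Gd (e * INR i) * (INR (i - j) * (INR (i - j) + 1) / 2)) by field end.
    auto.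
Qed.

Lemma Phi_bound G e : 0 <= e -> (forall x, 0 <= x -> Rabs (G x) <= x) ->
  forall n, Rabs (Phi G e n) <= e * (INR n * INR n).
Proof.
  intros He HG n. induction n.
  - simpl. rewrite Rabs_R0. lra.
  - simpl Phi. rewrite S_INR. eapply Rle_trans. apply Rabs_triang.
    pose proof (pos_INR n). assert (0 <= e * INR n) by nra. pose proof (HG _ H0). nra.
Qed.

Definition Uf pa A ps S i := PE pa A ps S (fun a s => INR (i + a - s) - INR i - (INR a - INR s)).

Lemma u_facts i a s (S : nat) : (s <= S)%nat ->
  0 <= INR (i + a - s) - INR i - (INR a - INR s) <= INR S /\
  ((S <= i)%nat -> INR (i + a - s) - INR i - (INR a - INR s) = 0) /\
  - INR S <= INR (i + a - s) - INR i /\ INR (i + a - s) - INR i <= INR a.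
Proof.
  intros Hs. pose proof (le_INR _ _ Hs). pose proof (pos_INR i). pose proof (pos_INR a). pose proof (pos_INR s).
  destruct (INR_sub_cases i a s) as [[Hle E]|[Hlt E]]; rewrite E.
  - split. lra. split. intros; lra. lra.
  - apply lt_INR in Hlt. rewrite plus_INR in Hlt. split. lra. split. intros HS. apply le_INR in HS. lra. lra.
Qed.

Lemma PE_abs pa A ps S F : bounded_pmf pa A -> bounded_pmf ps S -> Rabs (PE pa A ps S F) <= PE pa A ps S (fun a s => Rabs (F a s)).
Proof.
  intros Ha Hs. apply Rabs_le. split.
  - replace (- PE pa A ps S (fun a s => Rabs (F a s))) with (PE pa A ps S (fun a s => -1 * Rabs (F a s))) by (rewrite PE_scal; ring).
    apply PE_le; auto. intros. pose proof (Rle_abs (- F a s)). rewrite Rabs_Ropp in H1. lra.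
  - apply PE_le; auto. intros. apply Rle_abs.
Qed.

Lemma state_bound pa A ps S (eps sig2 L c : R) (h G Gd : R -> R) i :
  bounded_pmf pa A -> bounded_pmf ps S -> 0 <= eps -> 0 <= L ->
  pmf_mean pa A - pmf_mean ps S = - eps -> pmf_var pa A + pmf_var ps S = sig2 ->
  (forall x y, Rabs (G y - G x - Gd x * (y - x)) <= L * ((y - x) * (y - x))) ->
  (forall x, Rabs (Gd x) <= 1) ->
  (forall x, sig2 / 2 * Gd x - G x = h x - c) ->
  Rabs (Eop pa A ps S (Phi G eps) i - Phi G eps i - eps * (h (eps * INR i) - c) - G (eps * INR i) * Uf pa A ps S i)
   <= eps * eps * (eps + 1) / 2 + eps * ((2 * (INR A + INR S) + INR S + 1) / 2) * Uf pa A ps S i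
      + L * (eps * eps) * ((INR A + INR S) * (INR A + INR S) * (INR A + INR S)).
Proof.
  intros Ha Hs He HL Hmean Hvar Ht Hgd Hode.
  set (g := G (eps * INR i)). set (gd := Gd (eps * INR i)).
  set (M := INR A + INR S). set (Cu := 2 * M + INR S + 1).
  set (T := fun a s => Phi G eps (i + a - s) - Phi G eps i -
     (g * (INR a - INR s) + (eps * gd / 2) * ((INR a - INR s) * (INR a - INR s)) + (- (eps * gd / 2)) * (INR a - INR s)
      + g * (INR (i + a - s) - INR i - (INR a - INR s)))).
  assert (HT : forall a s, (a <= A)%nat -> (s <= S)%nat -> Rabs (T a s) <= eps * (Cu / 2) * (INR (i + a - s) - INR i - (INR a - INR s)) + L * (eps * eps) * (M * M * M)).
  { intros a s Ha' Hs'. destruct (u_facts i a s S Hs') as [Hu [_ [Hd1 Hd2]]].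
    pose proof (le_INR _ _ Ha'). pose proof (le_INR _ _ Hs'). pose proof (pos_INR a). pose proof (pos_INR s).
    pose proof (Phi_taylor G Gd L eps HL Ht i (i + a - s)) as HP. fold g gd in HP.
    revert Hu Hd1 Hd2 HP. unfold T.
    generalize (INR (i + a - s)). intros y Hu Hd1 Hd2 HP.
    set (x := INR a - INR s) in *. set (u := y - INR i - x) in *.
    assert (Hd : y - INR i = x + u) by (unfold u; ring).
    rewrite Hd in HP.
    set (R := Phi G eps (i + a - s) - Phi G eps i - (x + u) * g - eps * gd * ((x + u) * (x + u - 1) / 2)) in HP.
    replace (Phi G eps (i + a - s) - Phi G eps i - (g * x + eps * gd / 2 * (x * x) + - (eps * gd / 2) * x + g * u))
      with (R + (eps * gd / 2) * (u * (2 * x + u - 1))) by (unfold R; field).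
    assert (Habs : Rabs (x + u) <= M).
    { unfold M. apply Rabs_le. pose proof (pos_INR A). split; lra. }
    assert (Hcub : Rabs (x + u) * Rabs (x + u) * Rabs (x + u) <= M * M * M).
    { pose proof (Rabs_pos (x + u)). apply Rmult_le_compat. nra. lra. apply Rmult_le_compat; lra. lra. }
    assert (HR : Rabs R <= L * (eps * eps) * (M * M * M)).
    { eapply Rle_trans. exact HP. apply Rmult_le_compat_l. apply Rmult_le_pos; [lra| apply Rle_0_sqr]. exact Hcub. }
    assert (HC : Rabs (2 * x + u - 1) <= Cu).
    { unfold Cu, M. apply Rabs_le. pose proof (pos_INR A). split; unfold x in *; lra. }
    eapply Rle_trans. apply Rabs_triang. rewrite Rplus_comm. apply Rplus_le_compat; auto.
    rewrite !Rabs_mult. rewrite (Rabs_right u) by lra.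
    assert (Rabs (eps * gd / 2) <= eps / 2).
    { unfold Rdiv. rewrite !Rabs_mult. rewrite (Rabs_right eps) by lra. rewrite (Rabs_right (/2)) by lra.
      pose proof (Hgd (eps * INR i)). fold gd in H3. pose proof (Rabs_pos gd). nra. }
    pose proof (Rabs_pos (eps * gd / 2)). pose proof (Rabs_pos (2 * x + u - 1)).
    assert (Rabs (eps * gd / 2) * (u * Rabs (2 * x + u - 1)) <= eps / 2 * (u * Cu)).
    { apply Rmult_le_compat; auto. apply Rmult_le_pos; lra. apply Rmult_le_compat_l; lra. }
    lra. }
  assert (HE : Eop pa A ps S (Phi G eps) i = Phi G eps i + g * (- eps) + (eps * gd / 2) * (sig2 + eps * eps) + (- (eps * gd / 2)) * (- eps)
       + g * Uf pa A ps S i + PE pa A ps S T).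
  { rewrite Eop_PE.
    rewrite (PE_ext pa A ps S _ (fun a s => (((((fun _ _ => Phi G eps i) a s + g * (INR a - INR s)) + (eps * gd / 2) * ((INR a - INR s) * (INR a - INR s)))
        + (- (eps * gd / 2)) * (INR a - INR s)) + g * (INR (i + a - s) - INR i - (INR a - INR s))) + T a s))
      by (intros; unfold T; ring).
    rewrite !PE_plus, !PE_scal, PE_const, PE_X, PE_X2 by auto. unfold Uf. rewrite Hmean, Hvar. ring. }
  rewrite HE.
  assert (Hh : eps * (h (eps * INR i) - c) = eps * (sig2 / 2 * gd - g)) by (unfold g, gd; rewrite Hode; auto).
  rewrite Hh.
  replace (Phi G eps i + g * - eps + eps * gd / 2 * (sig2 + eps * eps) + - (eps * gd / 2) * - eps + g * Uf pa A ps S i +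
     PE pa A ps S T - Phi G eps i - eps * (sig2 / 2 * gd - g) - g * Uf pa A ps S i)
    with (eps * gd * (eps * eps + eps) / 2 + PE pa A ps S T) by field.
  assert (HU : 0 <= Uf pa A ps S i).
  { unfold Uf. rewrite <- (PE_const pa A ps S 0) by auto. apply PE_le; auto. intros a s _ Hs'. apply (u_facts i a s S Hs'). }
  assert (B1 : Rabs (eps * gd * (eps * eps + eps) / 2) <= eps * eps * (eps + 1) / 2).
  { unfold Rdiv. rewrite !Rabs_mult. rewrite (Rabs_right eps), (Rabs_right (/2)), (Rabs_right (eps * eps + eps)) by nra.
    pose proof (Hgd (eps * INR i)). fold gd in H. pose proof (Rabs_pos gd).
    assert (eps * Rabs gd <= eps * 1) by (apply Rmult_le_compat_l; lra).
    assert (eps * Rabs gd * (eps * eps + eps) <= eps * 1 * (eps * eps + eps)) by (apply Rmult_le_compat_r; nra).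
    lra. }
  assert (B2 : Rabs (PE pa A ps S T) <= eps * (Cu / 2) * Uf pa A ps S i + L * (eps * eps) * (M * M * M)).
  { eapply Rle_trans. apply PE_abs; auto.
    eapply Rle_trans. apply (PE_le _ _ _ _ _ _ Ha Hs HT).
    rewrite PE_plus, PE_scal, PE_const by auto. unfold Uf. lra. }
  eapply Rle_trans. apply Rabs_triang. lra.
Qed.

Lemma squeeze0 a b : (forall n, 0 <= a n <= b n) -> Un_cv b 0 -> Un_cv a 0.
Proof.
  intros H Hb eps He. destruct (Hb eps He) as [N HN]. exists N. intros n Hn. specialize (HN n Hn).
  unfold Rdist in *. rewrite Rminus_0_r in *. specialize (H n).
  rewrite Rabs_right in * by lra. lra.
Qed.

Lemma G_small (G : R -> R) : G 0 = 0 -> (forall x y, Rabs (G y - G x) <= Rabs (y - x)) -> forall x, 0 <= x -> Rabs (G x) <= x.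
Proof. intros H0 HL x Hx. specialize (HL 0 x). rewrite H0, !Rminus_0_r in HL. rewrite (Rabs_right x) in HL by lra. auto. Qed.

Lemma Eop_bound pa A ps S psi B i : bounded_pmf pa A -> bounded_pmf ps S ->
  (forall j, (j <= i + A)%nat -> Rabs (psi j) <= B) -> Rabs (Eop pa A ps S psi i) <= B.
Proof.
  intros Ha Hs H. rewrite Eop_PE. eapply Rle_trans. apply PE_abs; auto.
  rewrite <- (PE_const pa A ps S B) by auto. apply PE_le; auto. intros. apply H. lia.
Qed.

Lemma sq_shift (i A : nat) : (INR (i + A) + 1) * (INR (i + A) + 1) <= (INR A + 1) * (INR A + 1) * ((INR i + 1) * (INR i + 1)).
Proof. rewrite plus_INR. pose proof (pos_INR i). pose proof (pos_INR A). nra. Qed.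

Definition Kf (A S : nat) (mu c0 : R) : R :=
  INR S + (mu + 1) / 2 + (2 * (INR A + INR S) + INR S + 1) / 2 + 4 / c0 * ((INR A + INR S) * (INR A + INR S) * (INR A + INR S)).

Lemma main_eps pa A ps S pi eps mu c0 h :
  bounded_pmf pa A -> bounded_pmf ps S -> stationary pa A ps S pi ->
  pmf_mean pa A - pmf_mean ps S = - eps -> 0 < eps < mu -> 0 < c0 ->
  pmf_var pa A + pmf_var ps S >= c0 -> Lip1 h ->
  exists l1 l2, infinite_sum (fun n => pi n * h (eps * INR n)) l1 /\
    improper_int0 (fun x => h x * exp_density (2 / (pmf_var pa A + pmf_var ps S)) x) l2 /\
    Rabs (l1 - l2) <= Kf A S mu c0 * eps.
Proof.
  intros Ha Hs Hst Hmean He Hc0 Hvar Hh.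
  assert (Hpi : forall i, 0 <= pi i) by (destruct Hst; auto).
  assert (H1 := stat_sum1 _ _ _ _ _ Hst).
  remember (pmf_var pa A + pmf_var ps S) as sig2 eqn:Hsig.
  assert (Hsig0 : 0 < sig2) by lra.
  remember (2 / sig2) as th eqn:Hth.
  assert (Hth0 : 0 < th) by (subst th; apply Rdiv_lt_0_compat; lra).
  destruct (J_lim_exists h th Hh Hth0) as [c Hc].
  assert (Hc0' : c0 <= sig2) by lra.

  destruct (moment2 pa A ps S pi eps Ha Hs Hst Hmean ltac:(lra)) as [m2 Hm2].
  assert (Hm2t := isum_terms_cv0 _ _ Hm2).
  assert (Hsq : forall i, 0 <= pi i * ((INR i + 1) * (INR i + 1))) by (intros; apply Rmult_le_pos; [auto|apply Rle_0_sqr]).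
  assert (Hhb : forall x, 0 <= x -> Rabs (h x) <= Rabs (h 0) + x).
  { intros x Hx. pose proof (Hh x 0). rewrite Rminus_0_r, (Rabs_right x) in H by lra.
    pose proof (Rabs_triang_inv (h x) (h 0)). lra. }
  destruct (isum_dom (fun n => pi n * h (eps * INR n)) (fun n => (Rabs (h 0) + eps) * (pi n * ((INR n + 1) * (INR n + 1))))
      ((Rabs (h 0) + eps) * m2)) as [l1 Hl1].
  { intros n. rewrite Rabs_mult, (Rabs_right (pi n)) by (apply Rle_ge; auto).
    pose proof (pos_INR n). pose proof (Rabs_pos (h 0)). pose proof (Hpi n).
    assert (Rabs (h (eps * INR n)) <= (Rabs (h 0) + eps) * ((INR n + 1) * (INR n + 1))).
    { eapply Rle_trans. apply Hhb. nra. nra. }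
    replace ((Rabs (h 0) + eps) * (pi n * ((INR n + 1) * (INR n + 1)))) with (pi n * ((Rabs (h 0) + eps) * ((INR n + 1) * (INR n + 1)))) by ring.
    apply Rmult_le_compat_l; auto. }
  { apply isum_scal; auto. }
  exists l1, c. split; [exact Hl1|]. split; [apply improper_ok; auto|].
  assert (HGt := g_taylor h th c Hh Hth0 Hc).
  assert (HGd := gd_bound h th c Hh Hth0 Hc).
  assert (HGo : forall x, sig2 / 2 * gd h th c x - gf h th c x = h x - c).
  { intros x. rewrite <- (g_ode h th c Hth0 x). subst th. field. lra. }
  assert (HGs := G_small (gf h th c) (g0 h th c) (g_lip h th c Hh Hth0 Hc)).
  remember (gf h th c) as G eqn:HGdef. remember (gd h th c) as Gd eqn:HGddef. clear HGdef HGddef.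
  assert (HL0 : 0 <= 2 * th) by lra.
  assert (Hcv0 : forall K, Un_cv (fun i => K * (pi i * ((INR i + 1) * (INR i + 1)))) 0).
  { intros K. replace 0 with (K * 0) by ring. apply CV_mult; auto. apply cv_eventually_const with 0%nat; auto. }
  assert (HA2 : 0 <= (INR A + 1) * (INR A + 1)) by apply Rle_0_sqr.
  assert (Hmono : forall K, 0 <= K -> forall j k, (j <= k)%nat -> K * ((INR j + 1) * (INR j + 1)) <= K * ((INR k + 1) * (INR k + 1))).
  { intros K HK j k Hjk. apply le_INR in Hjk. pose proof (pos_INR j). apply Rmult_le_compat_l; auto. nra. }
  assert (Hcvs : forall K, 0 <= K -> Un_cv (fun i => pi i * (K * ((INR (i + A) + 1) * (INR (i + A) + 1)))) 0).
  { intros K HK. apply squeeze0 with (fun i => (K * ((INR A + 1) * (INR A + 1))) * (pi i * ((INR i + 1) * (INR i + 1)))); auto.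
    intros n. pose proof (sq_shift n A). pose proof (Hpi n). split.
    apply Rmult_le_pos; auto. apply Rmult_le_pos; auto. apply Rle_0_sqr.
    replace (K * ((INR A + 1) * (INR A + 1)) * (pi n * ((INR n + 1) * (INR n + 1)))) with
      (pi n * (K * ((INR A + 1) * (INR A + 1) * ((INR n + 1) * (INR n + 1))))) by ring.
    apply Rmult_le_compat_l; auto. apply Rmult_le_compat_l; auto. }
  assert (Hid : forall psi K, 0 <= K -> (forall j, Rabs (psi j) <= K * ((INR j + 1) * (INR j + 1))) ->
     exists L, infinite_sum (fun j => pi j * psi j) L /\ infinite_sum (fun j => pi j * Eop pa A ps S psi j) L).
  { intros psi K HK Hb.
    destruct (isum_dom (fun j => pi j * psi j) (fun j => K * (pi j * ((INR j + 1) * (INR j + 1)))) (K * m2)) as [L1 HL1].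
    { intros j. rewrite Rabs_mult, (Rabs_right (pi j)) by (apply Rle_ge; auto).
      replace (K * (pi j * ((INR j + 1) * (INR j + 1)))) with (pi j * (K * ((INR j + 1) * (INR j + 1)))) by ring.
      apply Rmult_le_compat_l; auto. }
    { apply isum_scal; auto. }
    destruct (isum_dom (fun j => pi j * Eop pa A ps S psi j) (fun j => (K * ((INR A + 1) * (INR A + 1))) * (pi j * ((INR j + 1) * (INR j + 1)))) ((K * ((INR A + 1) * (INR A + 1))) * m2)) as [L2 HL2].
    { intros j. rewrite Rabs_mult, (Rabs_right (pi j)) by (apply Rle_ge; auto).
      replace (K * ((INR A + 1) * (INR A + 1)) * (pi j * ((INR j + 1) * (INR j + 1)))) with (pi j * (K * ((INR A + 1) * (INR A + 1) * ((INR j + 1) * (INR j + 1))))) by ring.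
      apply Rmult_le_compat_l; auto.
      eapply Rle_trans. apply (Eop_bound pa A ps S psi (K * ((INR (j + A) + 1) * (INR (j + A) + 1))) j Ha Hs).
      intros k Hk. eapply Rle_trans. apply Hb. apply Hmono; auto.
      apply Rmult_le_compat_l; auto. apply sq_shift. }
    { apply isum_scal; auto. }
    exists L1. split; auto.
    replace L1 with L2; auto. symmetry.
    apply (stat_identity pa A ps S pi psi (fun j => K * ((INR j + 1) * (INR j + 1)))); auto. }
  destruct (Hid (Phi G eps) eps ltac:(lra)) as [LP [HP1 HP2]].
  { intros j. eapply Rle_trans. apply Phi_bound; auto. lra. pose proof (pos_INR j). apply Rmult_le_compat_l. lra. nra. }
  destruct (Hid INR 1 ltac:(lra)) as [LI [HI1 HI2]].
  { intros j. pose proof (pos_INR j). rewrite Rabs_right by lra. nra. }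
  assert (HU0 : forall i, 0 <= Uf pa A ps S i).
  { intros i. unfold Uf. rewrite <- (PE_const pa A ps S 0) by auto. apply PE_le; auto. intros a s _ Hs'. apply (u_facts i a s S Hs'). }
  assert (HU1 : forall i, (S <= i)%nat -> Uf pa A ps S i = 0).
  { intros i Hi. unfold Uf. rewrite <- (PE_const pa A ps S 0) by auto. apply PE_ext. intros a s _ Hs'. apply (u_facts i a s S Hs'); auto. }
  assert (HEI : forall i, Eop pa A ps S INR i - INR i = - eps + Uf pa A ps S i).
  { intros i. rewrite Eop_PE.
    rewrite (PE_ext pa A ps S _ (fun a s => ((fun _ _ => INR i) a s + (INR a - INR s)) + (INR (i + a - s) - INR i - (INR a - INR s))))
      by (intros; ring).
    rewrite !PE_plus, PE_const, PE_X by auto. unfold Uf. rewrite Hmean. ring. }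
  assert (HUs : infinite_sum (fun i => pi i * Uf pa A ps S i) eps).
  { assert (H0 := isum_minus _ _ _ _ HI2 HI1). rewrite Rminus_diag in H0.
    assert (H2 := isum_plus _ _ _ _ H0 (isum_scal _ eps _ H1)). rewrite Rplus_0_l, Rmult_1_r in H2.
    eapply isum_ext; [|exact H2]. intros i. cbv beta. rewrite <- Rmult_minus_distr_l, HEI. ring. }
  assert (HD := isum_minus _ _ _ _ HP2 HP1). rewrite Rminus_diag in HD.
  assert (Hhs : infinite_sum (fun i => pi i * (eps * (h (eps * INR i) - c))) (eps * l1 - eps * c * 1)).
  { eapply isum_ext; [|exact (isum_minus _ _ _ _ (isum_scal _ eps _ Hl1) (isum_scal _ (eps * c) _ H1))].
    intros i; cbv beta; ring. }
  destruct (isum_dom (fun i => pi i * (G (eps * INR i) * Uf pa A ps S i)) (fun i => eps * INR S * (pi i * Uf pa A ps S i)) (eps * INR S * eps)) as [SG HSG].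
  { intros i. rewrite !Rabs_mult, (Rabs_right (pi i)) by (apply Rle_ge; auto). rewrite (Rabs_right (Uf _ _ _ _ _)) by (apply Rle_ge; auto).
    destruct (Nat.le_gt_cases S i) as [Hi|Hi].
    - rewrite HU1 by auto. rewrite !Rmult_0_r. lra.
    - assert (Rabs (G (eps * INR i)) <= eps * INR S).
      { eapply Rle_trans. apply HGs. pose proof (pos_INR i); nra. apply lt_INR in Hi. pose proof (pos_INR i). nra. }
      pose proof (HU0 i). pose proof (Hpi i). pose proof (Rabs_pos (G (eps * INR i))).
      replace (eps * INR S * (pi i * Uf pa A ps S i)) with (pi i * (eps * INR S * Uf pa A ps S i)) by ring.
      apply Rmult_le_compat_l; auto. apply Rmult_le_compat_r; auto. }
  { apply isum_scal; auto. }
  assert (HSGb : Rabs SG <= eps * INR S * eps).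
  { apply (isum_abs_le _ _ _ _ HSG (isum_scal _ (eps * INR S) _ HUs)). intros i.
    rewrite !Rabs_mult, (Rabs_right (pi i)) by (apply Rle_ge; auto). rewrite (Rabs_right (Uf _ _ _ _ _)) by (apply Rle_ge; auto).
    destruct (Nat.le_gt_cases S i) as [Hi|Hi].
    - rewrite HU1 by auto. rewrite !Rmult_0_r. lra.
    - assert (Rabs (G (eps * INR i)) <= eps * INR S).
      { eapply Rle_trans. apply HGs. pose proof (pos_INR i); nra. apply lt_INR in Hi. pose proof (pos_INR i). nra. }
      pose proof (HU0 i). pose proof (Hpi i). pose proof (Rabs_pos (G (eps * INR i))).
      replace (eps * INR S * (pi i * Uf pa A ps S i)) with (pi i * (eps * INR S * Uf pa A ps S i)) by ring.
      apply Rmult_le_compat_l; auto. apply Rmult_le_compat_r; auto. }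
  assert (HDel := isum_minus _ _ _ _ (isum_minus _ _ _ _ HD Hhs) HSG).
  set (M := INR A + INR S).
  set (Kst := eps * eps * (eps + 1) / 2 + 2 * th * (eps * eps) * (M * M * M)).
  set (Cu2 := (2 * (INR A + INR S) + INR S + 1) / 2).
  assert (Hbd : infinite_sum (fun i => Kst * pi i + eps * Cu2 * (pi i * Uf pa A ps S i)) (Kst * 1 + eps * Cu2 * eps)).
  { apply isum_plus; apply isum_scal; auto. }
  assert (Hfin := isum_abs_le _ _ _ _ HDel Hbd).
  assert (Hfin' : Rabs (0 - (eps * l1 - eps * c * 1) - SG) <= Kst * 1 + eps * Cu2 * eps).
  { apply Hfin. intros i.
    pose proof (state_bound pa A ps S eps sig2 (2 * th) c h G Gd i Ha Hs ltac:(lra) HL0 Hmean (eq_sym Hsig) HGt HGd HGo) as Hst_i.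
    replace (pi i * Eop pa A ps S (Phi G eps) i - pi i * Phi G eps i - pi i * (eps * (h (eps * INR i) - c)) - pi i * (G (eps * INR i) * Uf pa A ps S i))
      with (pi i * (Eop pa A ps S (Phi G eps) i - Phi G eps i - eps * (h (eps * INR i) - c) - G (eps * INR i) * Uf pa A ps S i)) by ring.
    rewrite Rabs_mult, (Rabs_right (pi i)) by (apply Rle_ge; auto).
    replace (Kst * pi i + eps * Cu2 * (pi i * Uf pa A ps S i)) with (pi i * (Kst + eps * Cu2 * Uf pa A ps S i)) by ring.
    apply Rmult_le_compat_l; auto. unfold Kst, Cu2, M. lra. }
  clear Hfin HDel Hbd.
  assert (Hth2 : 2 * th <= 4 / c0).
  { subst th. unfold Rdiv. replace (2 * (2 * / sig2)) with (4 * / sig2) by ring. apply Rmult_le_compat_l. lra.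
    apply Rinv_le_contravar; lra. }
  assert (HM : 0 <= M) by (unfold M; pose proof (pos_INR A); pose proof (pos_INR S); lra).
  assert (HM3 : 0 <= M * M * M) by (apply Rmult_le_pos; [apply Rle_0_sqr|lra]).
  assert (HKst : Kst <= eps * eps * ((mu + 1) / 2 + 4 / c0 * (M * M * M))).
  { unfold Kst. assert (eps * eps * (eps + 1) / 2 <= eps * eps * ((mu + 1) / 2)).
    { unfold Rdiv. rewrite Rmult_assoc. apply Rmult_le_compat_l. apply Rle_0_sqr. lra. }
    assert (2 * th * (eps * eps) * (M * M * M) <= 4 / c0 * (eps * eps) * (M * M * M)).
    { apply Rmult_le_compat_r; auto. apply Rmult_le_compat_r; auto. apply Rle_0_sqr. }
    lra. }
  assert (Heps : eps * Rabs (l1 - c) <= eps * (eps * Kf A S mu c0)).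
  { rewrite <- (Rabs_right eps) at 1 by lra. rewrite <- Rabs_mult.
    replace (eps * (l1 - c)) with (- (0 - (eps * l1 - eps * c * 1) - SG) - SG) by ring.
    eapply Rle_trans. apply Rabs_triang. rewrite Rabs_Ropp, Rabs_Ropp.
    unfold Kf. fold M. unfold Cu2 in Hfin'. fold M in Hfin'. clearbody Kst M Cu2.
    assert (eps * INR S * eps = eps * (eps * INR S)) by ring.
    assert (eps * ((2 * M + INR S + 1) / 2) * eps = eps * (eps * ((2 * M + INR S + 1) / 2))) by ring.
    assert (eps * eps * ((mu + 1) / 2 + 4 / c0 * (M * M * M)) = eps * (eps * ((mu + 1) / 2 + 4 / c0 * (M * M * M)))) by ring.
    lra. }
  rewrite Rmult_comm. apply (Rmult_le_reg_l eps); lra.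
Qed.

Theorem theorem1
  (ps : nat -> R) (pa : R -> nat -> R) (Amax Smax : nat) (mu c0 : R)
  (Hps : bounded_pmf ps Smax) (Hmu : pmf_mean ps Smax = mu) (Hmu0 : 0 < mu)
  (Hpa : forall eps, 0 < eps < mu -> bounded_pmf (pa eps) Amax)
  (Hmean : forall eps, 0 < eps < mu -> pmf_mean (pa eps) Amax = mu - eps)
  (Hc0 : 0 < c0)
  (Hvar : forall eps, 0 < eps < mu ->
     pmf_var (pa eps) Amax + pmf_var ps Smax >= c0) :
  exists K : R,
    forall eps, 0 < eps < mu ->
    forall pi : nat -> R, stationary (pa eps) Amax ps Smax pi ->
    let theta := 2 / (pmf_var (pa eps) Amax + pmf_var ps Smax) in
    forall h : R -> R, Lip1 h ->
      exists l1 l2 : R,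
        infinite_sum (fun n => pi n * h (eps * INR n)) l1 /\
        improper_int0 (fun x => h x * exp_density theta x) l2 /\
        Rabs (l1 - l2) <= K * eps.
Proof.
  exists (Kf Amax Smax mu c0). intros eps He pi Hst theta h Hh. unfold theta.
  apply (main_eps (pa eps) Amax ps Smax pi eps mu c0 h); auto.
  rewrite Hmean, Hmu by auto. ring.
Qed.
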